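(* Let $A$ be a connected monounary algebra containing no cycle. If $A\not\cong Z$ and $A^{(\infty)}=A$, then $\mathbf V(A)=\mathbf V(E)$.
   Context: A monounary algebra is a pair $(A,f)$ with $A$ a nonempty set and $f:A\to A$; direct products are coordinatewise. It is connected if for all $x,y$ there are $m,n\ge0$ with $f^m(x)=f^n(y)$; it contains a cycle if $f^k(x)=x$ for some $x\in A$, $k\ge1$. A retract of $A$ is a nonempty subalgebra $M$ such that there is an endomorphism $h:A\to M$ with $h|_M=\mathrm{id}$. A retract variety is a class closed under isomorphisms, retracts and direct products; $\mathbf V(\mathcal K)$ is the smallest retract variety containing $\mathcal K$. $A^{(\infty)}$ is the set of $x\in A$ admitting a sequence $x_0=x,x_1,\dots$ in $A$ with $f(x_n)=x_{n-1}$ for all $n\ge1$. $Z=(\mathbb Z,k\mapsto k+1)$; $E$ has universe $\mathbb Z\cup\{(k,1):k\in\mathbb N\}$ with $f(k)=k+1$ on $\mathbb Z$, $f((k,1))=(k-1,1)$ for $k>1$ and $f((1,1))=0$. *)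

(* Defs.v *)
From Stdlib Require Import ZArith ClassicalEpsilon.

Record mua := MUA {
  carrier :> Type;
  op : carrier -> carrier;
  carrier_ne : inhabited carrier
}.
Arguments op {m} _.

Definition iter_op {A : mua} (n : nat) (x : A) : A := Nat.iter n (@op A) x.

Definition is_hom {A B : mua} (g : A -> B) : Prop := forall x, g (op x) = op (g x).

Definition isomorphic (A B : mua) : Prop :=
  exists g : A -> B, is_hom g /\ (forall x y, g x = g y -> x = y)
                     /\ (forall y, exists x, g x = y).

Definition sub_closed (A : mua) (S : A -> Prop) : Prop := forall x, S x -> S (op x).

Definition subalg (A : mua) (S : A -> Prop) (cl : sub_closed A S) (ne : exists x, S x) : mua :=
  {| carrier := {x : A | S x};
     op := fun y => exist _ (op (proj1_sig y)) (cl _ (proj2_sig y));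
     carrier_ne := match ne with ex_intro _ x hx => inhabits (exist _ x hx) end |}.

Definition is_retract (A : mua) (S : A -> Prop) (cl : sub_closed A S) (ne : exists x, S x) : Prop :=
  exists h : A -> subalg A S cl ne,
    is_hom h /\ (forall m : subalg A S cl ne, h (proj1_sig m) = m).

Lemma prod_inhabited (I : Type) (F : I -> mua) : inhabited (forall i, F i).
Proof.
  constructor. intro i. exact (epsilon (carrier_ne (F i)) (fun _ => True)).
Qed.

Definition prod_alg (I : Type) (F : I -> mua) : mua :=
  {| carrier := forall i, F i;
     op := fun x i => op (x i);
     carrier_ne := prod_inhabited I F |}.

Definition retract_variety (C : mua -> Prop) : Prop :=
  (forall A B, C A -> isomorphic A B -> C B) /\
  (forall A S cl ne, C A -> is_retract A S cl ne -> C (subalg A S cl ne)) /\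
  (forall (I : Type) (F : I -> mua), (forall i, C (F i)) -> C (prod_alg I F)).

Definition gen_variety (K : mua -> Prop) (B : mua) : Prop :=
  forall C, retract_variety C -> (forall X, K X -> C X) -> C B.

Definition V1 (A : mua) : mua -> Prop := gen_variety (fun X => X = A).

Definition connected (A : mua) : Prop :=
  forall x y : A, exists m n, iter_op m x = iter_op n y.

Definition has_cycle (A : mua) : Prop :=
  exists (x : A) (k : nat), 1 <= k /\ iter_op k x = x.

Definition in_inf (A : mua) (x : A) : Prop :=
  exists s : nat -> A, s 0 = x /\ forall n, op (s (S n)) = s n.

Definition Zalg : mua := {| carrier := Z; op := Z.succ; carrier_ne := inhabits 0%Z |}.

(* E: universe Z ∪ {(k,1) : k >= 1}; inr n encodes (n+1,1). *)
Definition E_op (x : Z + nat) : Z + nat :=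
  match x with
  | inl k => inl (Z.succ k)
  | inr O => inl 0%Z          (* (1,1) |-> 0 *)
  | inr (S n) => inr n        (* (n+2,1) |-> (n+1,1) *)
  end.

Definition Ealg : mua := {| carrier := (Z + nat)%type; op := E_op; carrier_ne := inhabits (inl 0%Z) |}.

(* Main.v *)
Require Import Defs.
From Stdlib Require Import ZArith Lia ClassicalEpsilon ProofIrrelevance FunctionalExtensionality Classical.
Open Scope Z_scope.

Lemma iter_S' (A : mua) n (x : A) : iter_op (S n) x = iter_op n (op x).
Proof. unfold iter_op. induction n; simpl; [reflexivity| rewrite <- IHn; reflexivity]. Qed.

Lemma iter_add (A : mua) m n (x : A) : iter_op (m + n) x = iter_op m (iter_op n x).
Proof. unfold iter_op. induction m; simpl; [reflexivity| now rewrite IHm]. Qed.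

Lemma acyc_inj (A : mua) : ~ has_cycle A -> forall i j (x : A), iter_op i x = iter_op j x -> i = j.
Proof.
  intros Hn i j x H.
  assert (forall i j, (i < j)%nat -> iter_op i x = iter_op j x -> False).
  { intros i0 j0 Hlt Heq. apply Hn. exists (iter_op i0 x), (j0 - i0)%nat. split; [lia|].
    rewrite <- iter_add. replace (j0 - i0 + i0)%nat with j0 by lia. auto. }
  destruct (Nat.lt_trichotomy i j) as [h|[h|h]]; auto; exfalso; eauto.
Qed.

Lemma level_exists (A : mua) : connected A -> ~ has_cycle A ->
  exists d : A -> Z, forall x, d (op x) = d x + 1.
Proof.
  intros Hc Hn. destruct (carrier_ne A) as [c].
  assert (H: forall x:A, {p : nat*nat | iter_op (fst p) x = iter_op (snd p) c}).
  { intro x. apply constructive_indefinite_description. destruct (Hc x c) as [m [n H]].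
    exists (m,n). exact H. }
  exists (fun x => Z.of_nat (snd (proj1_sig (H x))) - Z.of_nat (fst (proj1_sig (H x)))).
  intro x. destruct (H x) as [[m n] Hx]. destruct (H (op x)) as [[m' n'] Hx']. simpl in *.
  assert (E1: iter_op (S m' + m) x = iter_op (S m' + n) c).
  { rewrite !iter_add, Hx. reflexivity. }
  assert (E2: iter_op (m + S m') x = iter_op (m + n') c).
  { rewrite !iter_add, iter_S', Hx'. reflexivity. }
  replace (m + S m')%nat with (S m' + m)%nat in E2 by lia.
  rewrite E1 in E2. apply acyc_inj in E2; auto. lia.
Qed.

Lemma d_iter (A : mua) (d : A -> Z) : (forall x, d (op x) = d x + 1) ->
  forall k x, d (iter_op k x) = d x + Z.of_nat k.
Proof. intros Hd k x. induction k; simpl; [lia|]. unfold iter_op in *. simpl. rewrite Hd, IHk. lia. Qed.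

Lemma d_piter (A : mua) (d : A -> Z) (p : A -> A) : (forall x, d (op x) = d x + 1) ->
  (forall x, op (p x) = x) -> forall n x, d (Nat.iter n p x) = d x - Z.of_nat n.
Proof.
  intros Hd Hp n x. induction n; simpl; [lia|].
  assert (h := Hd (p (Nat.iter n p x))). rewrite Hp in h. lia.
Qed.

Lemma iter_p (A : mua) (p : A -> A) : (forall x, op (p x) = x) ->
  forall n x, iter_op n (Nat.iter n p x) = x.
Proof. intros Hp n. induction n; intro x; [reflexivity|]. simpl Nat.iter. rewrite iter_S', Hp. auto. Qed.

Lemma p_exists (A : mua) : (forall x : A, in_inf A x) -> exists p : A -> A, forall x, op (p x) = x.
Proof.
  intro H. assert (H': forall x:A, {y | op y = x}).
  { intro x. apply constructive_indefinite_description. destruct (H x) as [s [h0 h]].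
    exists (s 1%nat). rewrite h. auto. }
  exists (fun x => proj1_sig (H' x)). intro x. exact (proj2_sig (H' x)).
Qed.

Lemma sig_eq (T : Type) (P : T -> Prop) (u v : {x | P x}) : proj1_sig u = proj1_sig v -> u = v.
Proof. destruct u, v; simpl; intro; subst. f_equal. apply proof_irrelevance. Qed.

Lemma retract_transfer (X Y : mua) (e : Y -> X) (h : X -> Y) :
  is_hom e -> is_hom h -> (forall y, h (e y) = y) ->
  forall C, retract_variety C -> C X -> C Y.
Proof.
  intros He Hh Hhe C [Ciso [Cret Cprod]] CX.
  destruct (carrier_ne Y) as [y0].
  set (S := fun x : X => exists y, e y = x).
  assert (cl : sub_closed X S).
  { intros x [y Hy]. exists (op y). rewrite He, Hy. auto. }
  assert (ne : exists x, S x) by (exists (e y0); exists y0; auto).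
  assert (Hr : is_retract X S cl ne).
  { exists (fun x => exist S (e (h x)) (ex_intro _ (h x) eq_refl)). split.
    - intro x. apply sig_eq. simpl. rewrite Hh, He. auto.
    - intros [x [y Hy]]. apply sig_eq. simpl. subst. rewrite Hhe. auto. }
  apply (Ciso _ _ (Cret X S cl ne CX Hr)).
  exists (fun m => h (proj1_sig m)). split; [|split].
  - intro m. simpl. apply Hh.
  - intros [x [y Hy]] [x' [y' Hy']]. simpl. intro E. apply sig_eq. simpl. subst.
    rewrite !Hhe in E. subst. auto.
  - intro y. exists (exist S (e y) (ex_intro _ y eq_refl)). simpl. apply Hhe.
Qed.
Set Default Goal Selector "1".

Definition hy (A:mua) (d:A->Z) (y x : A) : (Z + nat)%type :=
  if excluded_middle_informative (exists k, iter_op k x = y)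
  then inr (Z.to_nat (d y - d x)) else inl (d x - d y - 1).

Lemma hy_hom (A : mua) d : ~has_cycle A -> (forall x, d (op x) = d x + 1) ->
  forall y x, hy A d y (op x) = E_op (hy A d y x).
Proof.
  intros Hn Hd y x. unfold hy.
  destruct (excluded_middle_informative (exists k, iter_op k x = y)) as [[k Hk]|Hk].
  - assert (Dk := d_iter A d Hd k x). rewrite Hk in Dk.
    destruct k as [|k'].
    + simpl in Hk. subst y.
      destruct (excluded_middle_informative (exists k, iter_op k (op x) = x)) as [[j Hj]|Hj].
      * exfalso. apply Hn. exists x, (S j). split; [lia|]. rewrite iter_S'. auto.
      * rewrite Hd. replace (Z.to_nat (d x - d x)) with 0%nat by lia. simpl. f_equal. lia.
    + destruct (excluded_middle_informative (exists k, iter_op k (op x) = y)) as [[j Hj]|Hj].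
      * rewrite Hd. replace (Z.to_nat (d y - d x)) with (S k') by lia. simpl. f_equal. lia.
      * exfalso. apply Hj. exists k'. rewrite <- iter_S'. auto.
  - destruct (excluded_middle_informative (exists k, iter_op k (op x) = y)) as [[j Hj]|Hj].
    + exfalso. apply Hk. exists (S j). rewrite iter_S'. auto.
    + simpl. f_equal. rewrite Hd. lia.
Qed.

Lemma hy_self (A : mua) d x : hy A d x x = inr 0%nat.
Proof.
  unfold hy. destruct (excluded_middle_informative _) as [_|H].
  - f_equal. lia.
  - exfalso. apply H. exists 0%nat. reflexivity.
Qed.

Lemma hy_inr0 (A : mua) d : (forall x, d (op x) = d x + 1) ->
  forall y x, hy A d y x = inr 0%nat -> x = y.
Proof.
  intros Hd y x. unfold hy. destruct (excluded_middle_informative _) as [[k Hk]|H]; intro E;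
    [|discriminate].
  injection E. intro E'. assert (Dk := d_iter A d Hd k x). rewrite Hk in Dk.
  assert (k = 0%nat) by lia. subst k. exact Hk.
Qed.

Definition Pw (A : mua) : mua := prod_alg A (fun _ => Ealg).

Definition eP (A : mua) d (x : A) : Pw A := fun y => hy A d y x.

Lemma iter_P (A : mua) k (u : Pw A) i : (iter_op k u) i = @iter_op Ealg k (u i).
Proof. induction k; [reflexivity|]. change ((iter_op (S k) u) i) with (@op Ealg ((iter_op k u) i)). rewrite IHk. reflexivity. Qed.

Definition lvlE (v : (Z + nat)%type) : Z :=
  match v with inl k => k | inr n => - Z.of_nat n - 1 end.

Lemma lvlE_op v : lvlE (E_op v) = lvlE v + 1.
Proof. destruct v as [k|[|n]]; cbn [E_op lvlE]; lia. Qed.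

Definition zl (A : mua) (p : A -> A) (a0 : A) (k : Z) : A :=
  if Z.leb 0 k then iter_op (Z.to_nat k) a0 else Nat.iter (Z.to_nat (- k)) p a0.

Lemma zl_op (A : mua) p a0 : (forall x, op (p x) = x) ->
  forall k, op (zl A p a0 k) = zl A p a0 (k + 1).
Proof.
  intros Hp k. unfold zl.
  destruct (Z.leb_spec 0 k); destruct (Z.leb_spec 0 (k+1)); try lia.
  - replace (Z.to_nat (k+1)) with (S (Z.to_nat k)) by lia. reflexivity.
  - assert (k = -1) as -> by lia. simpl. apply Hp.
  - replace (Z.to_nat (-k)) with (S (Z.to_nat (-(k+1)))) by lia. simpl. apply Hp.
Qed.

Definition rspec (A : mua) d (u : Pw A) (kx : nat * A) : Prop :=
  iter_op (fst kx) u = eP A d (snd kx) /\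
  forall j x, (j < fst kx)%nat -> iter_op j u <> eP A d x.

Definition rP (A : mua) d p (c : A) (u : Pw A) : A :=
  match excluded_middle_informative (exists kx, rspec A d u kx) with
  | left H => let kx := proj1_sig (constructive_indefinite_description _ H) in
              Nat.iter (fst kx) p (snd kx)
  | right _ => zl A p c (lvlE (u c))
  end.

Lemma eP_hom (A : mua) d : ~has_cycle A -> (forall x, d (op x) = d x + 1) -> is_hom (eP A d).
Proof.
  intros Hn Hd x. apply functional_extensionality_dep. intro y. simpl. unfold eP.
  apply hy_hom; auto.
Qed.

Lemma eP_inj (A : mua) d : (forall x, d (op x) = d x + 1) ->
  forall x x', eP A d x = eP A d x' -> x = x'.
Proof.
  intros Hd x x' E. apply (f_equal (fun u => u x')) in E. unfold eP in E.
  rewrite hy_self in E. apply hy_inr0 in E; auto.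
Qed.

Lemma rP_spec (A : mua) d p c : (forall x, d (op x) = d x + 1) ->
  forall u k x, rspec A d u (k, x) -> rP A d p c u = Nat.iter k p x.
Proof.
  intros Hd u k x Hs. unfold rP.
  destruct (excluded_middle_informative _) as [H|H].
  - destruct (constructive_indefinite_description _ H) as [[k' x'] [H1 H2]]. simpl in *.
    destruct Hs as [S1 S2]. simpl in *.
    assert (k = k').
    { destruct (Nat.lt_trichotomy k k') as [h|[h|h]]; auto.
      - exfalso. eapply H2; eauto.
      - exfalso. eapply S2; eauto. }
    subst. rewrite S1 in H1. apply eP_inj in H1; auto. subst. reflexivity.
  - exfalso. apply H. eauto.
Qed.

Lemma rP_nospec (A : mua) d p c :
  forall u, (forall k x, iter_op k u <> eP A d x) -> rP A d p c u = zl A p c (lvlE (u c)).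
Proof.
  intros u Hu. unfold rP. destruct (excluded_middle_informative _) as [H|H]; auto.
  exfalso. destruct H as [[k x] [H1 _]]. eapply Hu; eauto.
Qed.

Lemma min_witness (Q : nat -> Prop) : (exists k, Q k) -> exists k, Q k /\ forall j, (j < k)%nat -> ~ Q j.
Proof.
  intros [k Hk]. apply NNPP. intro Hno.
  assert (forall n j, (j <= n)%nat -> ~ Q j).
  { induction n; intros j Hj HQ.
    - apply Hno. exists j. split; auto. intros; lia.
    - destruct (Nat.eq_dec j (S n)) as [->|h].
      + apply Hno. exists (S n). split; auto. intros j' Hj'. apply IHn. lia.
      + apply (IHn j); auto. lia. }
  eapply (H k k); eauto.
Qed.

Lemma A_in_VE (A : mua) (d : A -> Z) (p : A -> A) : ~has_cycle A -> (forall x, d (op x) = d x + 1) ->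
  (forall x, op (p x) = x) -> forall C, retract_variety C -> C Ealg -> C A.
Proof.
  intros Hn Hd Hp C HC CE. destruct (carrier_ne A) as [c].
  apply (retract_transfer (Pw A) A (eP A d) (rP A d p c)); auto.
  - apply eP_hom; auto.
  - intro u.
    destruct (classic (exists k x, iter_op k u = eP A d x)) as [Hr|Hr].
    + destruct (min_witness (fun k => exists x, iter_op k u = eP A d x)) as [k [[x Hx] Hmin]].
      { destruct Hr as [k [x Hx]]. eauto. }
      assert (Hs : rspec A d u (k, x)).
      { split; simpl; auto. intros j x' Hj E. apply (Hmin j Hj). eauto. }
      destruct k as [|k'].
      * simpl in Hx. subst u. rewrite (rP_spec A d p c Hd _ 0%nat x Hs).
        rewrite <- (eP_hom A d Hn Hd).
        rewrite (rP_spec A d p c Hd _ 0%nat (op x)); [reflexivity|].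
        split; cbn [fst snd]; auto. intros; lia.
      * rewrite (rP_spec A d p c Hd _ _ _ Hs).
        rewrite (rP_spec A d p c Hd _ k' x).
        { simpl. symmetry. apply Hp. }
        split; cbn [fst snd].
        { rewrite <- iter_S'. auto. }
        intros j x' Hj E. apply (Hmin (S j)); [lia|]. exists x'. rewrite iter_S'. auto.
    + assert (Hr' : forall k x, iter_op k u <> eP A d x).
      { intros k x E. apply Hr. eauto. }
      rewrite (rP_nospec A d p c u Hr').
      rewrite rP_nospec.
      * simpl. rewrite lvlE_op, zl_op; auto.
      * intros k x E. apply (Hr' (S k) x). rewrite iter_S'. auto.
  - intro x. apply (rP_spec A d p c Hd _ 0%nat x). split; cbn [fst snd]; auto. intros; lia.
  - destruct HC as [_ [_ Hprod]]. apply (Hprod A (fun _ => Ealg)). auto.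
Qed.

Lemma branching (A : mua) (d : A -> Z) (p : A -> A) : connected A -> ~has_cycle A ->
  (forall x, d (op x) = d x + 1) -> (forall x, op (p x) = x) ->
  ~ isomorphic A Zalg -> exists a b : A, a <> b /\ op a = op b.
Proof.
  intros Hc Hn Hd Hp Hiso. apply NNPP. intro Hno.
  assert (Hinj : forall x y : A, op x = op y -> x = y).
  { intros x y E. apply NNPP. intro ne. apply Hno. eauto. }
  assert (Hiinj : forall m (x y : A), iter_op m x = iter_op m y -> x = y).
  { induction m; intros x y E; [exact E|]. apply IHm. apply Hinj. exact E. }
  apply Hiso. exists d. split; [|split].
  - intro x. simpl. rewrite Hd. lia.
  - intros x y E. destruct (Hc x y) as [m [n H]].
    assert (h1 := d_iter A d Hd m x). assert (h2 := d_iter A d Hd n y).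
    rewrite H in h1. assert (m = n) by lia. subst. eauto.
  - destruct (carrier_ne A) as [c]. intro t.
    destruct (Z.le_gt_cases (d c) t).
    + exists (iter_op (Z.to_nat (t - d c)) c). rewrite d_iter; auto. lia.
    + exists (Nat.iter (Z.to_nat (d c - t)) p c). rewrite (d_piter A d p); auto. lia.
Qed.

Definition Lb (A : mua) (p : A -> A) (b c : A) (k : Z) : A :=
  if Z.leb 0 k then iter_op (Z.to_nat k) c else Nat.iter (Z.to_nat (- k - 1)) p b.

Definition eE (A : mua) (p : A -> A) (a b : A) (v : Ealg) : A :=
  match v with
  | inl k => Lb A p b (op a) k
  | inr n => Nat.iter n p a
  end.

Definition hE (A : mua) (d : A -> Z) (a : A) (x : A) : Ealg :=
  if excluded_middle_informative (exists n, iter_op n x = a)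
  then inr (Z.to_nat (- (d x - d (op a)) - 1)) else inl (d x - d (op a)).

Lemma E_in_VA (A : mua) (d : A -> Z) (p : A -> A) (a b : A) : ~has_cycle A ->
  (forall x, d (op x) = d x + 1) -> (forall x, op (p x) = x) ->
  a <> b -> op a = op b ->
  forall C, retract_variety C -> C A -> C Ealg.
Proof.
  intros Hn Hd Hp Hab Hop C HC CA.
  apply (retract_transfer A Ealg (eE A p a b) (hE A d a)); auto.
  - intros [k|[|n]]; simpl.
    + unfold Lb. destruct (Z.leb_spec 0 k); destruct (Z.leb_spec 0 (Z.succ k)); try lia.
      * replace (Z.to_nat (Z.succ k)) with (S (Z.to_nat k)) by lia. reflexivity.
      * assert (k = -1) as -> by lia. simpl. auto.
      * replace (Z.to_nat (-k - 1)) with (S (Z.to_nat (- Z.succ k - 1))) by lia.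
        simpl. symmetry. apply Hp.
    + reflexivity.
    + symmetry. apply Hp.
  - intro x. unfold hE.
    destruct (excluded_middle_informative (exists n, iter_op n x = a)) as [[n Hx]|Hx].
    + assert (Dn := d_iter A d Hd n x). rewrite Hx in Dn. assert (Da := Hd a).
      destruct n as [|n'].
      * simpl in Hx. subst x.
        destruct (excluded_middle_informative (exists n, iter_op n (op a) = a)) as [[j Hj]|Hj].
        -- exfalso. apply Hn. exists a, (S j). split; [lia|]. rewrite iter_S'. auto.
        -- replace (Z.to_nat (- (d a - d (op a)) - 1)) with 0%nat by lia. simpl. f_equal. lia.
      * destruct (excluded_middle_informative (exists n, iter_op n (op x) = a)) as [[j Hj]|Hj].
        -- replace (Z.to_nat (- (d x - d (op a)) - 1)) with (S n') by lia. simpl. f_equal.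
           rewrite Hd. lia.
        -- exfalso. apply Hj. exists n'. rewrite <- iter_S'. auto.
    + destruct (excluded_middle_informative (exists n, iter_op n (op x) = a)) as [[j Hj]|Hj].
      * exfalso. apply Hx. exists (S j). rewrite iter_S'. auto.
      * simpl. f_equal. rewrite Hd. lia.
  - assert (Da := Hd a). assert (Db := Hd b). rewrite <- Hop in Db.
    intros [k|n]; unfold hE.
    + assert (DL : d (eE A p a b (inl k)) = d (op a) + k).
      { simpl. unfold Lb. destruct (Z.leb_spec 0 k).
        - rewrite d_iter; auto. lia.
        - rewrite (d_piter A d p); auto. lia. }
      destruct (excluded_middle_informative _) as [[n Hx]|Hx].
      * exfalso. assert (Dn := d_iter A d Hd n (eE A p a b (inl k))). rewrite Hx in Dn.
        simpl in Hx. unfold Lb in Hx. destruct (Z.leb_spec 0 k); [lia|].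
        replace (Z.to_nat (-k-1)) with n in Hx by lia.
        rewrite iter_p in Hx; auto.
      * f_equal. lia.
    + destruct (excluded_middle_informative _) as [[m Hx]|Hx].
      * f_equal. simpl. rewrite (d_piter A d p); auto. lia.
      * exfalso. apply Hx. exists n. simpl. apply iter_p; auto.
Qed.

Theorem lemma4p1 (A : mua) :
  connected A -> ~ has_cycle A ->
  ~ isomorphic A Zalg ->
  (forall x : A, in_inf A x) ->
  forall B : mua, V1 A B <-> V1 Ealg B.
Proof.
  intros Hc Hn Hiso Hinf B.
  destruct (level_exists A Hc Hn) as [d Hd].
  destruct (p_exists A Hinf) as [p Hp].
  destruct (branching A d p Hc Hn Hd Hp Hiso) as [a [b [Hab Hop]]].
  split; intros HB C HC HK.
  - apply HB; auto. intros X ->. apply (A_in_VE A d p Hn Hd Hp C HC). apply HK. reflexivity.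
  - apply HB; auto. intros X ->. apply (E_in_VA A d p a b Hn Hd Hp Hab Hop C HC). apply HK. reflexivity.
Qed.
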